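(* Let $(X,d_X,\mu_X)$ be a finite metric measure space, $X=\{x_1,\dots,x_n\}$, with $\mu_X(x_i)>0$ for all $i$, and let $1\le k\le n$. Then for all $i,j$, \[ E_{X,k}(x_i,x_j)=|d_X(x_i,x_j)-[\Phi_k(x_i),\Phi_k(x_j)]|\le\frac{|\lambda_{k+1}|}{\sqrt{\mu_X(x_i)\mu_X(x_j)}}. \]
   Context: The distance kernel operator of the finite space is the matrix $D_{ij}=d_X(x_i,x_j)\mu_X(x_j)$, self-adjoint for the inner product $\langle v,w\rangle_Q=\sum_i v_iw_i\mu_X(x_i)$. It has real eigenvalues $\lambda_1,\dots,\lambda_n$ ordered by decreasing absolute value (assumed of multiplicity one) and a $Q$-orthonormal basis of real eigenvectors $e_1,\dots,e_n$; set $\lambda_{n+1}:=0$. The distance kernel embedding is $\Phi_k(x_j)=(\sqrt{\lambda_1}(e_1)_j,\dots,\sqrt{\lambda_k}(e_k)_j)\in\mathbb{C}^k$, the square root of a negative number taken with positive imaginary part. For $v,w\in\mathbb{C}^k$, $[v,w]=\sum_{l=1}^k v_lw_l$. *)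

(* Defs.v *)
From HB Require Import structures.
From mathcomp Require Import all_boot all_order all_algebra.
From mathcomp Require Import complex.
Set Implicit Arguments. Unset Strict Implicit. Unset Printing Implicit Defensive.
Import Order.TTheory GRing.Theory Num.Theory.
Local Open Scope ring_scope.

Section DistKernel.
Variable R : rcfType.
Variable n : nat.

Definition is_metric (d : 'I_n -> 'I_n -> R) : Prop :=
  [/\ forall i, d i i = 0,
      forall i j, i != j -> 0 < d i j,
      forall i j, d i j = d j i &
      forall i j l, d i l <= d i j + d j l].

Definition dist_kernel (d : 'I_n -> 'I_n -> R) (mu : 'I_n -> R) : 'M[R]_n :=
  \matrix_(i, j) (d i j * mu j).

Definition Qdot (mu : 'I_n -> R) (v w : 'cV[R]_n) : R :=
  \sum_i v i 0 * w i 0 * mu i.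

(* lambda_{m+1} in 1-based notation = lam_ext m ; lambda_{n+1} := 0 *)
Definition lam_ext (lam : 'I_n -> R) (m : nat) : R :=
  match @insub nat (fun m => m < n)%N _ m with
  | Some i => lam i
  | None => 0
  end.
End DistKernel.

Definition csqrt (R : rcfType) (x : R) : R[i] :=
  if 0 <= x then Complex (Num.sqrt x) 0 else Complex 0 (Num.sqrt (- x)).

(* distance kernel embedding Phi_k(x_j) in C^k; the eigenvectors e_l are the
   columns of E, (e_l)_j = E j l *)
Definition Phi (R : rcfType) (n k : nat) (hk : (k <= n)%N)
  (lam : 'I_n -> R) (E : 'M[R]_n) (j : 'I_n) : 'rV[R[i]]_k :=
  \row_(l < k) (csqrt (lam (widen_ord hk l)) * Complex (E j (widen_ord hk l)) 0).

(* [v,w] = sum_l v_l w_l (bilinear, no conjugation) *)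
Definition cbracket (R : rcfType) (k : nat) (v w : 'rV[R[i]]_k) : R[i] :=
  \sum_(l < k) v 0 l * w 0 l.

(* Main.v *)
Require Import Defs.
From HB Require Import structures.
From mathcomp Require Import all_boot all_order all_algebra.
From mathcomp Require Import complex.
From mathcomp Require Import ring lra.
Import Order.TTheory GRing.Theory Num.Theory.
Local Open Scope ring_scope.


Lemma csqrt_sq (R : rcfType) (x : R) : csqrt x * csqrt x = (x%:C)%C.
Proof.
rewrite /csqrt; case: ifP => hx; rewrite /GRing.mul /=.
  by rewrite -expr2 sqr_sqrtr // !mul0r mulr0 subr0 addr0.
rewrite !mul0r mulr0 -expr2 sqr_sqrtr ?opprK ?sub0r ?addr0 ?add0r //.
by rewrite oppr_ge0 ltW // ltNge hx.
Qed.
Lemma normc_real (R : rcfType) (x : R) : ComplexField.Normc.normc (x%:C)%C = `|x|.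
Proof. by rewrite /= expr0n /= addr0 sqrtr_sqr. Qed.
Lemma amgm (R: rcfType) (x y a b : R) : 0 <= x -> 0 <= y ->
  Num.sqrt x * Num.sqrt y * `|a*b| <= (a*(a*x) + b*(b*y))/2.
Proof.
move=> hx hy.
have ex : x = Num.sqrt x ^+ 2 by rewrite sqr_sqrtr.
have ey : y = Num.sqrt y ^+ 2 by rewrite sqr_sqrtr.
have ea : a * a = `|a| ^+ 2 by rewrite real_normK ?num_real // expr2.
have eb : b * b = `|b| ^+ 2 by rewrite real_normK ?num_real // expr2.
rewrite !mulrA ea eb normrM [in X in _ <= X]ex [in X in _ <= X]ey.
move: (Num.sqrt x) (Num.sqrt y) `|a| `|b| => p q A B.
have : 0 <= (p * A - q * B) ^+ 2 by apply: sqr_ge0.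
move=> h; nra.
Qed.

Theorem proposition6p14 (R : rcfType) (n : nat)
  (d : 'I_n -> 'I_n -> R) (mu : 'I_n -> R)
  (lam : 'I_n -> R) (E : 'M[R]_n) (k : nat)
  (hd : is_metric d)
  (hmu : forall i, 0 < mu i)
  (heig : forall l : 'I_n, dist_kernel d mu *m col l E = lam l *: col l E)
  (horth : forall l m : 'I_n, Qdot mu (col l E) (col m E) = (l == m)%:R)
  (hord : forall l m : 'I_n, (l <= m)%N -> `|lam m| <= `|lam l|)
  (hsimple : injective lam)
  (hk1 : (1 <= k)%N) (hk : (k <= n)%N) :
  forall i j : 'I_n,
    ComplexField.Normc.normc (Complex (d i j) 0 - cbracket (Phi hk lam E i) (Phi hk lam E j))
      <= `|lam_ext lam k| / Num.sqrt (mu i * mu j).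
Proof.
set A : 'M[R]_n := E^T *m diag_mx (\row_i mu i).
have hAE : A *m E = 1%:M.
  apply/matrixP => l m; rewrite !mxE /A mul_mx_diag.
  rewrite -horth /Qdot; apply: eq_bigr => p _; rewrite !mxE.
  by rewrite mulrAC.
have hEA := mulmx1C hAE.
have hsum : forall i j, \sum_l E i l * (E j l * mu j) = (i == j)%:R.
  move=> i j; move/matrixP: hEA => /(_ i j); rewrite !mxE => <-.
  by apply: eq_bigr => l _; rewrite /A mul_mx_diag !mxE.
have hDE : dist_kernel d mu *m E = E *m diag_mx (\row_l lam l).
  apply/matrixP => i l; rewrite mul_mx_diag !mxE mulrC.
  move/matrixP: (heig l) => /(_ i 0); rewrite !mxE => <-.
  by apply: eq_bigr => p _; rewrite !mxE.
have hd2 : forall i j, d i j = \sum_l lam l * (E i l * E j l).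
  move=> i j.
  have : (dist_kernel d mu *m (E *m A)) i j = dist_kernel d mu i j.
    by rewrite hEA mulmx1.
  rewrite mulmxA hDE -mulmxA /A mulmxA !mul_mx_diag !mxE => h.
  apply: (mulIf (lt0r_neq0 (hmu j))); rewrite -h mulr_suml.
  by apply: eq_bigr => l _; rewrite !mxE; ring.
move=> i j.
pose w := widen_ord hk.
have hbr : cbracket (Phi hk lam E i) (Phi hk lam E j) =
   ((\sum_(l < k) lam (w l) * (E i (w l) * E j (w l)))%:C)%C.
  rewrite /cbracket rmorph_sum; apply: eq_bigr => l _; rewrite !mxE !complexr0.
  by rewrite mulrACA csqrt_sq -!rmorphM.
rewrite hbr complexr0 -rmorphB normc_real hd2.
rewrite (bigID (fun l : 'I_n => (l < k)%N)) /= (big_ord_narrow hk).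
rewrite /w addrAC subrr add0r.
have hL : forall l : 'I_n, ~~ (l < k)%N -> `|lam l| <= `|lam_ext lam k|.
  move=> l hl; rewrite /lam_ext; case: insubP => [m _ hm | hn].
    by apply: hord; rewrite hm leqNgt.
  move: hn hl; rewrite -!leqNgt => hnk hkl; have := ltn_ord l.
  by rewrite ltnNge (leq_trans hnk hkl).
have hs : (\sum_l `|E i l * E j l|) * Num.sqrt (mu i * mu j) <= 1.
  rewrite mulr_suml (sqrtrM _ (ltW (hmu i))).
  apply: (@le_trans _ _ (\sum_l (E i l * (E i l * mu i) + E j l * (E j l * mu j))/2)).
    by apply: ler_sum => l _; rewrite mulrC; apply: amgm; apply: ltW.
  rewrite -mulr_suml big_split /= !hsum !eqxx/=; lra.
set L := `|lam_ext lam k|.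
have sp : 0 < Num.sqrt (mu i * mu j) by rewrite sqrtr_gt0 mulr_gt0.
apply: le_trans; first exact: ler_norm_sum.
apply: (@le_trans _ _ (\sum_(l < n | ~~ (l < k)%N) L * `|E i l * E j l|)).
  by apply: ler_sum => l hl; rewrite normrM ler_wpM2r // hL.
rewrite -mulr_sumr.
apply: (@le_trans _ _ (L * \sum_l `|E i l * E j l|)).
  apply: ler_wpM2l; first exact: normr_ge0.
  rewrite [X in _ <= X](bigID (fun l : 'I_n => (l < k)%N)) /= lerDr.
  by apply: sumr_ge0.
rewrite ler_pdivlMr // -mulrA.
rewrite -[X in _ <= X]mulr1; apply: ler_wpM2l; [exact: normr_ge0 | exact: hs].
Qed.
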